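(* Let $n\ge1$ be even and let $\mathcal{D}_{S_1},\mathcal{D}_{S_2}\subseteq\mathcal{D}_{[n]}\setminus\{n\}$ be such that $\mathrm{ICG}(n,\mathcal{D}_{S_1})$ and $\mathrm{ICG}(n,\mathcal{D}_{S_2})$ are isospectral. Then (a) $\sum_{d\in\mathcal{D}_{S_1},\ d\text{ odd}}\phi(n/d)=\sum_{d\in\mathcal{D}_{S_2},\ d\text{ odd}}\phi(n/d)$, and (b) $\sum_{d\in\mathcal{D}_{S_1},\ d\text{ even}}\phi(n/d)=\sum_{d\in\mathcal{D}_{S_2},\ d\text{ even}}\phi(n/d)$.
   Context: Identify $\mathbb{Z}_n$ with $[n]=\{1,\dots,n\}$. For a divisor $d$ of $n$, $G_n(d)=\{j\in[n]:\gcd(j,n)=d\}$; $\mathcal{D}_{[n]}$ is the set of positive divisors of $n$. For $\mathcal{D}\subseteq\mathcal{D}_{[n]}\setminus\{n\}$, $\mathrm{ICG}(n,\mathcal{D})=\mathrm{Cay}(\mathbb{Z}_n,S)$ with $S=\bigcup_{d\in\mathcal{D}}G_n(d)$, and $\mathcal{D}=\mathcal{D}_S$. $\phi$ is Euler's totient function. Isospectral means having the same multiset of adjacency eigenvalues. *)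

(* Defs.v *)
From mathcomp Require Import all_boot all_order all_algebra all_field.
Set Implicit Arguments. Unset Strict Implicit. Unset Printing Implicit Defensive.
Import GRing.Theory Num.Theory.
Local Open Scope ring_scope.

(* Vertices of Z_n are represented by 'I_n (residues 0..n-1; residue 0 plays
   the role of n in [n]).  ICG(n, D) = Cay(Z_n, S), S = {k : gcd(k,n) \in D},
   so i ~ j iff gcd((j - i) mod n, n) \in D.  Note gcdn 0 n = n. *)
Definition ICG_adj (n : nat) (D : pred nat) : 'M[algC]_n :=
  \matrix_(i < n, j < n) ((D (gcdn ((j + n - i) %% n) n)) : nat)%:R.

Definition proper_divisor_set (n : nat) (D : pred nat) : Prop :=
  forall d, D d -> (d %| n)%N && (d != n).

Definition isospectral (n : nat) (A B : 'M[algC]_n) : Prop :=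
  forall x : algC, mup x (char_poly A) = mup x (char_poly B).

(* Main.v *)
Require Import Defs.
From mathcomp Require Import all_boot all_order all_algebra all_field zify ring.
Set Implicit Arguments. Unset Strict Implicit. Unset Printing Implicit Defensive.


Lemma odd_gcd n t : ~~ odd n -> odd (gcdn t n) = odd t.
Proof.
move=> nev; apply: negb_inj; rewrite -!dvdn2 dvdn_gcd.
by rewrite [2 %| n]dvdn2 nev andbT.
Qed.

Lemma sum_mult d m (F : nat -> nat) : 0 < d ->
  \sum_(0 <= t < d * m) (d %| t) * F t = \sum_(0 <= u < m) F (d * u).
Proof.
move=> d0; elim: m => [|m IH]; first by rewrite muln0 !big_geq.
rewrite big_nat_recr //= -IH mulnS addnC (@big_cat_nat _ _ _ (d * m)) //= ?leq_addl //.
congr (_ + _); rewrite big_ltn; last by rewrite -{1}[d * m]addn0 ltn_add2l.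
rewrite dvdn_mulr // mul1n big1_seq ?addn0 // => t /andP[_].
rewrite mem_index_iota => /andP[t1 t2].
case dt: (d %| t) => //; exfalso.
have : d %| t - d * m by rewrite dvdn_sub // dvdn_mulr.
move/dvdn_leq; lia.
by rewrite leq_addr.
Qed.

Lemma count_gcd n d : 0 < n -> d %| n ->
  \sum_(t < n) (gcdn t n == d) = totient (n %/ d).
Proof.
move=> n0 dn; have d0 : 0 < d by move: dn; case: d => //; rewrite dvd0n => /eqP e0; rewrite e0 in n0.
rewrite -(big_mkord xpredT (fun t => (gcdn t n == d) : nat)).
have e : n = d * (n %/ d) by rewrite mulnC divnK.
rewrite totient_count_coprime.
transitivity (\sum_(0 <= t < n) (d %| t) * (gcdn t n == d)).
  apply: eq_bigr => t _; case g: (gcdn t n == d); last by rewrite muln0.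
  by rewrite -(eqP g) dvdn_gcdl.
rewrite {1}e sum_mult //; apply: eq_bigr => u _.
rewrite {1}e -muln_gcdr -{3}[d]muln1 eqn_pmul2l // gcdnC.
by [].
Qed.

Lemma tot_sum n (D : pred nat) (Q : bool -> bool) : 0 < n -> ~~ odd n ->
  (forall d, D d -> (d %| n) && (d != n)) ->
  \sum_(d < n.+1 | D d && Q (odd d)) totient (n %/ d) =
  \sum_(t < n) (D (gcdn t n) && Q (odd t)).
Proof.
move=> n0 nev Dp.
have gle (t : 'I_n) : gcdn t n < n.+1 by rewrite ltnS dvdn_leq // dvdn_gcdr.
under [RHS]eq_bigr => t _ do rewrite -(odd_gcd t nev).
rewrite (partition_big (fun t : 'I_n => inord (gcdn t n) : 'I_n.+1) xpredT) //=.
rewrite big_mkcond /=; apply: eq_bigr => j _.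
transitivity (\sum_(t < n | inord (gcdn t n) == j) (D j && Q (odd j)) : nat); last first.
  apply: eq_bigr => t /eqP <-; rewrite inordK //.
case: ifP => Fj; last by rewrite big1.
have [jn _] := andP (Dp j (proj1 (andP Fj))).
rewrite -(count_gcd n0 jn) [RHS]big_mkcond /=; apply: eq_bigr => t _.
have -> : (inord (gcdn t n) == j) = (gcdn t n == j).
  by rewrite -val_eqE /= inordK.
by case: (gcdn t n == j).
Qed.

Import Order.Theory GRing.Theory Num.Theory. Local Open Scope ring_scope.


Lemma sum_pair (G : nat -> nat) h :
  (forall k, (k <= h.*2)%N -> G (h.*2 - k)%N = G k) ->
  odd (\sum_(k < h.*2) G k)%N = odd (G 0 + G h)%N.
Proof.
move=> Gs; case: h Gs => [|h] Gs; first by rewrite big_ord0 /= addnn odd_double.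
rewrite -addnn big_split_ord /=.
have -> : (\sum_(k < h.+1) G (h.+1 + k) = \sum_(k < h.+1) G k.+1)%N.
  rewrite (reindex_inj rev_ord_inj); apply: eq_bigr => k _ /=.
  have kh : (k < h.+1)%N := ltn_ord k.
  rewrite -(Gs (h.+1 + (h.+1 - k.+1))%N); last by rewrite -addnn; lia.
  by congr G; rewrite -addnn; lia.
rewrite [X in (X + _)%N]big_ord_recl [X in (_ + X)%N]big_ord_recr /=.
have -> : (\sum_(i < h) G (bump 0 i) = \sum_(i < h) G i.+1)%N by [].
rewrite !oddD; case: (odd (\sum_(i < h) G i.+1)%N); case: (odd (G 0%N)); by case: (odd (G h.+1)).
Qed.

Section Circ.
Variables (n : nat) (n_gt0 : (0 < n)%N) (w : algC) (w_prim : n.-primitive_root w)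
  (g : nat -> algC).
Definition circ : 'M[algC]_n := \matrix_(i < n, j < n) g ((j + n - i) %% n).
Definition lam (k : nat) := \sum_(t < n) g t * w ^+ (t * k).
Definition Fm : 'M[algC]_n := \matrix_(j < n, k < n) w ^+ (j * k).

Lemma circ_F : circ *m Fm = Fm *m diag_mx (\row_(k < n) lam k).
Proof.
apply/matrixP => i k; rewrite mul_mx_diag !mxE /lam mulr_sumr.
pose h (t : 'I_n) : 'I_n := Ordinal (ltn_pmod (i + t) n_gt0).
have hinj : injective h.
  move=> t1 t2 /(congr1 val) /= /eqP; rewrite eqn_modDl !modn_small // => /eqP.
  exact: val_inj.
rewrite (reindex_inj hinj); apply: eq_bigr => t _ /=; rewrite !mxE.
have -> : (((i + t) %% n + n - i) %% n = t)%N.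
  rewrite -addnBA; last exact: ltnW.
  rewrite modnDml -addnA addnBA; last exact: ltnW.
  rewrite addnBA; last by apply: (leq_trans (ltnW (ltn_ord i))); rewrite leq_addl.
  by rewrite addnC addnK modnDr modn_small.
rewrite mulrCA; congr (_ * _); rewrite /=.
by rewrite -exprD -mulnDl !exprM (prim_expr_mod w_prim).
Qed.

Lemma Fm_unit : Fm \in unitmx.
Proof.
have -> : Fm = Vandermonde n (\row_(k < n) w ^+ k).
  by apply/matrixP => i j; rewrite !mxE -exprM mulnC.
rewrite unitmxE det_Vandermonde unitfE; apply/prodf_neq0 => i _.
rewrite prodf_seq_neq0; apply/allP => j _; apply/implyP => lij; rewrite !mxE subr_eq0 (eq_prim_root_expr w_prim).
by rewrite !modn_small // neq_ltn lij orbT.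
Qed.

Lemma char_poly_circ : char_poly circ = \prod_(k < n) ('X - (lam k)%:P).
Proof.
pose Dg := diag_mx (\row_(k < n) lam k).
have -> : \prod_(k < n) ('X - (lam k)%:P) = char_poly Dg.
  by rewrite char_poly_trig ?diag_mx_is_trig //; apply: eq_bigr => k _; rewrite !mxE eqxx mulr1n.
pose P := map_mx (@polyC algC) Fm.
have eq1 : char_poly_mx circ *m P = P *m char_poly_mx Dg.
  rewrite /char_poly_mx mulmxBl mulmxBr scalar_mxC -!map_mxM circ_F //.
have dP : \det P != 0.
  by rewrite det_map_mx polyC_eq0 -unitfE -unitmxE Fm_unit.
apply: (mulIf dP); rewrite /char_poly -!det_mulmx eq1 det_mulmx mulrC det_mulmx //.
Qed.

Lemma mup_circ x : mup x (char_poly circ) = (\sum_(k < n) (lam k == x))%N.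
Proof.
rewrite char_poly_circ -(big_map (fun k : 'I_n => lam k) xpredT (fun y => 'X - y%:P)).
rewrite mu_prod_XsubC count_map -sum1_count big_mkcond /=.
by apply: eq_bigr => k _; rewrite /= /in_mem /=; case: (lam k == x).
Qed.

Lemma expN (y : algC) a : y ^+ n = 1 -> (a <= n)%N -> y ^+ (n - a) = (y ^+ a)^-1.
Proof.
move=> yn an; have nz : y ^+ a != 0.
  apply: expf_neq0; apply/eqP => y0; move: yn; rewrite y0 expr0n eqn0Ngt n_gt0 /=.
  by move/eqP; rewrite eq_sym oner_eq0.
have u : y ^+ a * y ^+ (n - a) = 1 by rewrite -exprD subnKC.
by rewrite -(mulKf nz (y ^+ (n - a))) u mulr1.
Qed.

Hypothesis gsym : forall t, (t < n)%N -> g ((n - t) %% n) = g t.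

Lemma lam_sym k : (k <= n)%N -> lam (n - k) = lam k.
Proof.
move=> kn; rewrite /lam.
pose h (t : 'I_n) : 'I_n := Ordinal (ltn_pmod (n - t) n_gt0).
have hinv : cancel h h.
  move=> t; apply: val_inj => /=; case: (posnP t) => [t0|tpos].
    by rewrite t0 subn0 modnn subn0 modnn.
  rewrite (modn_small (_ : n - t < n)%N); last by rewrite ltn_subrL tpos n_gt0.
  by rewrite subKn ?modn_small // ltnW.
rewrite (reindex_inj (can_inj hinv)); apply: eq_bigr => t _ /=.
rewrite gsym //; congr (_ * _).
have wn : w ^+ n = 1 := prim_expr_order w_prim.
rewrite exprM (prim_expr_mod w_prim) (expN wn (ltnW (ltn_ord t))) exprVn.
have wtn : (w ^+ t) ^+ n = 1 by rewrite -exprM mulnC exprM wn expr1n.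
by rewrite (expN wtn kn) invrK -exprM.
Qed.

Lemma mup_odd h x : n = h.*2 ->
  odd (mup x (char_poly circ)) = odd ((lam 0 == x) + (lam h == x))%N.
Proof.
move=> Hn; rewrite mup_circ -(big_mkord xpredT (fun k => (lam k == x) : nat)).
rewrite [in LHS]Hn big_mkord; apply: (@sum_pair (fun k => (lam k == x) : nat) h) => k kh.
by rewrite -Hn lam_sym // Hn.
Qed.

Lemma lam0 : lam 0 = \sum_(t < n) g t.
Proof. by apply: eq_bigr => t _; rewrite muln0 expr0 mulr1. Qed.

Lemma w_half h : n = h.*2 -> w ^+ h = -1.
Proof.
move=> Hn; have hpos : (0 < h)%N by move: n_gt0; rewrite Hn double_gt0.
have hn : (h < n)%N by rewrite Hn -addnn -{1}[h]addn0 ltn_add2l.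
have : (w ^+ h) ^+ 2 == 1 by rewrite -exprM muln2 -Hn prim_expr_order.
rewrite sqrf_eq1 => /orP[|/eqP //].
rewrite -(expr0 w) (eq_prim_root_expr w_prim) mod0n modn_small //.
by rewrite eqn0Ngt hpos.
Qed.

Lemma lam_half h : n = h.*2 -> lam h = \sum_(t < n) g t * (-1) ^+ t.
Proof.
by move=> Hn; apply: eq_bigr => t _; rewrite mulnC exprM (w_half Hn).
Qed.

Lemma norm_w : `|w| = 1.
Proof.
apply/eqP; rewrite -(pexpr_eq1 n_gt0) ?normr_ge0 //.
by rewrite -normrX prim_expr_order // normr1.
Qed.

Lemma lam_norm (b : nat -> nat) k : (forall t, g t = (b t)%:R) -> `|lam k| <= lam 0.
Proof.
move=> gb; rewrite lam0; apply: le_trans (ler_norm_sum _ _ _) _.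
by apply: ler_sum => t _; rewrite normrM normrX norm_w expr1n mulr1 gb normr_nat.
Qed.
End Circ.


Definition gD (n : nat) (D : pred nat) (t : nat) : algC := ((D (gcdn t n)) : nat)%:R.
Definition Ev (n : nat) (D : pred nat) := (\sum_(t < n) (D (gcdn t n) && ~~ odd t))%N.
Definition Od (n : nat) (D : pred nat) := (\sum_(t < n) (D (gcdn t n) && odd t))%N.

Lemma gD_sym n D t : (t < n)%N -> gD n D ((n - t) %% n) = gD n D t.
Proof.
move=> tn; rewrite /gD; case: (posnP t) => [->|tpos]; first by rewrite subn0 modnn.
rewrite modn_small; last by rewrite ltn_subrL tpos (leq_ltn_trans _ tn).
have e : n = (n - t + t)%N by rewrite subnK // ltnW.
by rewrite {2}e gcdnDl; rewrite {2}e gcdnDr gcdnC.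
Qed.

Lemma lam0_ICG n w D : lam n w (gD n D) 0 = (Ev n D + Od n D)%:R.
Proof.
rewrite lam0 /Ev /Od -big_split /= natr_sum; apply: eq_bigr => t _.
by rewrite /gD; case: (D _); case: (odd t).
Qed.

Lemma lamh_ICG n w D h : (0 < n)%N -> n.-primitive_root w -> n = h.*2 ->
  lam n w (gD n D) h = (Ev n D)%:R - (Od n D)%:R.
Proof.
move=> n0 wp Hn; rewrite (lam_half n0 wp) // /Ev /Od !natr_sum -sumrB.
apply: eq_bigr => t _; rewrite -signr_odd /gD.
by case: (D _); case: (odd t); rewrite /= ?expr1 ?expr0 ?mulr1 ?mulrN1 ?subr0 ?sub0r ?mul0r ?oppr0.
Qed.

Lemma ICG_circ n D : ICG_adj n D = circ n (gD n D).
Proof. by apply/matrixP => i j; rewrite !mxE. Qed.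

Lemma mup_ICG n w D x : (0 < n)%N -> n.-primitive_root w ->
  mup x (char_poly (ICG_adj n D)) = (\sum_(k < n) (lam n w (gD n D) k == x))%N.
Proof. by move=> n0 wp; rewrite ICG_circ (mup_circ n0 wp). Qed.

Lemma iso_max n w D1 D2 : (0 < n)%N -> n.-primitive_root w ->
  isospectral (ICG_adj n D1) (ICG_adj n D2) ->
  lam n w (gD n D1) 0 <= lam n w (gD n D2) 0.
Proof.
move=> n0 wp iso; set x := lam n w (gD n D1) 0.
have : (0 < mup x (char_poly (ICG_adj n D2)))%N.
  rewrite -iso (mup_ICG _ _ n0 wp) (bigD1 (Ordinal n0)) //=.
  by rewrite /x eqxx.
rewrite (mup_ICG _ _ n0 wp); case: (pickP (fun k : 'I_n => lam n w (gD n D2) k == x)).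
  move=> k /eqP lk _; have x0 : 0 <= x by rewrite /x lam0_ICG ler0n.
  rewrite -(ger0_norm x0) -lk; apply: (lam_norm n0 wp (b := fun t => D2 (gcdn t n) : nat)).
  by [].
by move=> none; rewrite big1 // => k _; rewrite none.
Qed.

Lemma iso_EO n D1 D2 : (0 < n)%N -> ~~ odd n ->
  isospectral (ICG_adj n D1) (ICG_adj n D2) ->
  Ev n D1 = Ev n D2 /\ Od n D1 = Od n D2.
Proof.
move=> n0 nev iso.
have [w wp] := C_prim_root_exists n0.
have Hn : n = (n./2).*2 by rewrite -{1}(odd_double_half n) (negbTE nev).
set h := n./2 in Hn.
have iso' : isospectral (ICG_adj n D2) (ICG_adj n D1) by move=> x; rewrite iso.
have a12 : lam n w (gD n D1) 0 = lam n w (gD n D2) 0.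
  by apply/le_anti; rewrite !iso_max.
have P i x : odd (mup x (char_poly (ICG_adj n (if i then D1 else D2)))) =
   odd ((lam n w (gD n (if i then D1 else D2)) 0 == x) + (lam n w (gD n (if i then D1 else D2)) h == x))%N.
  by rewrite ICG_circ (mup_odd n0 wp (@gD_sym n _) x Hn).
have Pe x : odd ((lam n w (gD n D1) 0 == x) + (lam n w (gD n D1) h == x))%N =
            odd ((lam n w (gD n D2) 0 == x) + (lam n w (gD n D2) h == x))%N.
  by rewrite -(P true) -(P false) /= iso.
have b12 : lam n w (gD n D1) h = lam n w (gD n D2) h.
  case: (eqVneq (lam n w (gD n D1) h) (lam n w (gD n D1) 0)) => [e|ne].
    move: (Pe (lam n w (gD n D1) 0)); rewrite e eqxx a12 eqxx /=.
    by case: eqP => //.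
  move: (Pe (lam n w (gD n D1) h)); rewrite eqxx eq_sym (negbTE ne) -a12 eq_sym (negbTE ne) /=.
  by case: eqP.
move: a12 b12; rewrite !lam0_ICG !(lamh_ICG _ n0 wp Hn) => /eqP a /eqP b.
rewrite eqr_nat in a.
have c : ((Ev n D1 + Od n D2)%:R - (Ev n D2 + Od n D1)%:R = ((Ev n D1)%:R - (Od n D1)%:R) - ((Ev n D2)%:R - (Od n D2)%:R) :> algC).
  rewrite !natrD; ring.
move: c; rewrite (eqP b) subrr => /eqP; rewrite subr_eq0 eqr_nat => c.
move/eqP: a => a; move/eqP: c => c; split; lia.
Qed.

Local Close Scope ring_scope.

Theorem corollary2p7 (n : nat) (D1 D2 : pred nat) :
  (1 <= n)%N -> ~~ odd n ->
  proper_divisor_set n D1 -> proper_divisor_set n D2 ->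
  isospectral (ICG_adj n D1) (ICG_adj n D2) ->
  (\sum_(d < n.+1 | D1 d && odd d) totient (n %/ d)
     = \sum_(d < n.+1 | D2 d && odd d) totient (n %/ d))%N /\
  (\sum_(d < n.+1 | D1 d && ~~ odd d) totient (n %/ d)
     = \sum_(d < n.+1 | D2 d && ~~ odd d) totient (n %/ d))%N.
Proof.
move=> n1 nev P1 P2 iso.
have [E O] := iso_EO n1 nev iso.
split.
  transitivity (Od n D1); first exact: (tot_sum (fun b => b) n1 nev P1).
  rewrite O; symmetry; exact: (tot_sum (fun b => b) n1 nev P2).
transitivity (Ev n D1); first exact: (tot_sum negb n1 nev P1).
rewrite E; symmetry; exact: (tot_sum negb n1 nev P2).
Qed.
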